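(* Let $a_{01},a_{10}>0$, $a_\triangle=a_{01}+a_{10}$, and let $x_\triangle\ge 0$ be a fixed integer. Under $H$, let $\theta\in(0,1)$ have prior $p_H(\theta)=\mathrm{Beta}(\theta\mid a_{01},a_{10})$, and let imaginary data $x_{01}\in\{0,\dots,x_\triangle\}$ have conditional sampling distribution $h(x_{01}\mid x_\triangle,\theta)=\binom{x_\triangle}{x_{01}}\theta^{x_{01}}(1-\theta)^{x_\triangle-x_{01}}$; under $H_0$, $\theta=1/2$. Define $$BF^{Co}_{H,H_0}(x)=\frac{\int_0^1 h(x_{01}\mid x_\triangle,\theta)p_H(\theta)\,d\theta}{h(x_{01}\mid x_\triangle,1/2)}$$ and the conditionally-intrinsic prior $p^{CI}_H(\theta\mid H_0)=p_H(\theta)\,E_\theta\big[BF^{Co}_{H,H_0}(x)^{-1}\big]$, the expectation being with respect to $x_{01}\sim h(\cdot\mid x_\triangle,\theta)$. Then $$p^{CI}_H(\theta\mid H_0)=\sum_{x_{01}=0}^{x_\triangle}\binom{x_\triangle}{x_{01}}\left(\frac12\right)^{x_\triangle}\mathrm{Beta}\big(\theta\mid a_{01}+x_{01},\,a_\triangle-a_{01}+x_\triangle-x_{01}\big).$$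
   Context: $\mathrm{Beta}(\theta\mid A,B)=\theta^{A-1}(1-\theta)^{B-1}/B(A,B)$ denotes the Beta density with parameters $A,B>0$ evaluated at $\theta$, where $B(A,B)=\int_0^1t^{A-1}(1-t)^{B-1}dt$. In the paper's motivation, $\theta$ is the conditional probability of a $0\to1$ swing given a swing in a matched-pair $2\times2$ table, $x_{01}$ and $x_{10}=x_\triangle-x_{01}$ are imaginary off-diagonal counts, and the Beta$(a_{01},a_{10})$ prior arises from a Dirichlet$(a_{00},a_{01},a_{10},a_{11})$ prior on the cell probabilities. *)

(* Defs.v *)
From mathcomp Require Import all_boot all_order all_algebra.
From mathcomp Require Import all_classical all_reals all_analysis.
Set Implicit Arguments. Unset Strict Implicit. Unset Printing Implicit Defensive.
Import Order.TTheory GRing.Theory Num.Theory.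
Import numFieldNormedType.Exports.
Local Open Scope classical_set_scope.
Local Open Scope ring_scope.

Section Defs.
Variable R : realType.

Definition betaB (A B : R) : R :=
  \int[@lebesgue_measure R]_(t in `]0, 1[) (t `^ (A - 1) * (1 - t) `^ (B - 1)).

Definition beta_dens (A B theta : R) : R :=
  theta `^ (A - 1) * (1 - theta) `^ (B - 1) / betaB A B.

Definition h_samp (xtri x01 : nat) (theta : R) : R :=
  'C(xtri, x01)%:R * theta ^+ x01 * (1 - theta) ^+ (xtri - x01).

Definition BF_Co (a01 a10 : R) (xtri x01 : nat) : R :=
  (\int[@lebesgue_measure R]_(theta in `]0, 1[)
      (h_samp xtri x01 theta * beta_dens a01 a10 theta))
  / h_samp xtri x01 (1 / 2).

Definition ci_prior (a01 a10 : R) (xtri : nat) (theta : R) : R :=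
  beta_dens a01 a10 theta *
  \sum_(x01 < xtri.+1) h_samp xtri x01 theta * (BF_Co a01 a10 xtri x01)^-1.

End Defs.

(* Main.v *)
Require Import Defs.
From mathcomp Require Import all_boot all_order all_algebra.
From mathcomp Require Import all_classical all_reals all_analysis.
From mathcomp Require Import ring lra measurable_realfun.
Import Order.TTheory GRing.Theory Num.Theory.
Import numFieldNormedType.Exports.
Local Open Scope classical_set_scope.
Local Open Scope ring_scope.

Section S.
Variable R : realType.

Lemma powR_bnd (m x r : R) : 0 < m -> m <= x -> x <= 1 ->
  expR (- (`|r| * - ln m)) <= x `^ r <= expR (`|r| * - ln m).
Proof.
move=> m0 mx x1.
have x0 : 0 < x by apply: lt_le_trans mx.
have hL : ln m <= ln x by rewrite ler_ln // posrE.
have hL0 : ln x <= 0 by rewrite ln_le0.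
have hb : `|r * ln x| <= `|r| * - ln m.
  rewrite normrM ler_wpM2l // ler0_norm //; lra.
rewrite /powR gt_eqF //.
move: hb; rewrite ler_norml => /andP[h1 h2].
by rewrite !ler_expR h1 h2.
Qed.
Local Notation mu := (@lebesgue_measure R).

Lemma powR_cont_pos (p x : R) : 0 < x -> {for x, continuous (@powR R ^~ p)}.
Proof.
move=> x0; apply/differentiable_continuous; rewrite -derivable1_diffP.
by apply: derivable_powR; rewrite in_itv /= andbT.
Qed.

Lemma intA (p e : R) : -1 < p -> 0 < e -> e < 1 ->
  (\int[mu]_(x in `[e, 1%R]) ((x `^ p)%:E) <= ((p+1)^-1)%:E)%E.
Proof.
move=> p1 e0 e1.
have p10 : 0 < p + 1 by lra.
pose F : R -> R := (p+1)^-1 *: (@powR R ^~ (p+1)).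
have dF (x : R) : 0 < x -> is_derive x 1 F ((p+1)^-1 *: ((p+1) * x `^ (p+1-1))).
  move=> x0; apply: is_deriveZ; exact: is_derive1_powR.
have cf : {within `[e, 1%R], continuous (@powR R ^~ p)}.
  apply: derivable_within_continuous => x; rewrite in_itv /= => /andP[ex _].
  by apply: derivable_powR; rewrite in_itv /= andbT; lra.
have dFo : derivable_oo_LRcontinuous F e 1.
  split.
  + move=> x; rewrite in_itv /= => /andP[ex _].
    by have [] := dF x ltac:(lra).
  + apply: cvg_at_right_filter; apply/differentiable_continuous.
    by rewrite -derivable1_diffP; have [] := dF e e0.
  + apply: cvg_at_left_filter; apply/differentiable_continuous.
    by rewrite -derivable1_diffP; have [] := dF 1 ltr01.
have dFE : {in `]e, 1%R[, (F^`())%classic =1 (@powR R ^~ p)}.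
  move=> x; rewrite in_itv /= => /andP[ex _].
  rewrite derive1E; have [_ ->] := dF x ltac:(lra).
  rewrite /= addrK. by rewrite -mulr_algl scaler1 mulrA mulVf ?mul1r // gt_eqF.
rewrite (continuous_FTC2 e1 cf dFo dFE).
have Fv y : F y = (p+1)^-1 * y `^ (p+1) by [].
rewrite -EFinB lee_fin !Fv powR1 /= mulr1 lerBlDr lerDl.
by rewrite mulr_ge0 // ?invr_ge0 ?powR_ge0 // ltW.
Qed.
Lemma intB (q e : R) : -1 < q -> 0 < e -> e < 1 ->
  (\int[mu]_(x in `[0%R, (1 - e)%R]) (((1 - x) `^ q)%:E) <= ((q+1)^-1)%:E)%E.
Proof.
move=> q1 e0 e1.
have r01 : 0 <= 1 - e <= 1 by apply/andP; split; lra.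
rewrite (@integration_by_substitution_onem R (fun x => (1 - x) `^ q) (1 - e) r01).
  rewrite (_ : unstable.onem (1 - e) = e); last by rewrite /unstable.onem subKr.
  under eq_integral do rewrite /unstable.onem subKr.
  exact: intA.
apply: continuous_in_subspaceT => x; rewrite inE /= in_itv /= => /andP[_ xe].
apply: (@continuous_comp _ _ _ (fun x : R => 1 - x) (@powR R ^~ q)); first by apply: continuousB => //; exact: cvg_cst.
by apply: powR_cont_pos; lra.
Qed.


Lemma E0 (r : R) : 0 <= r -> (0 <= r%:E)%E.
Proof. by rewrite lee_fin. Qed.

Definition gfun (p q t : R) := t `^ p * (1 - t) `^ q.

Lemma gfun_ge0 p q t : 0 <= gfun p q t.
Proof. by rewrite /gfun mulr_ge0 // powR_ge0. Qed.

Lemma gfun_mT p q : measurable_fun setT (gfun p q).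
Proof.
apply: measurable_funM; first exact: measurable_powR.
apply: (@measurableT_comp _ _ _ _ _ _ (@powR R ^~ q)); first exact: measurable_powR.
by apply: measurable_funB => //; exact: measurable_cst.
Qed.

Lemma gfun_m p q D : measurable D -> measurable_fun D (fun x => (gfun p q x)%:E).
Proof.
move=> mD; apply/measurable_EFinP; apply: measurable_funTS; exact: gfun_mT.
Qed.

Lemma gfun_ub p q t : 0 < t < 1 ->
  gfun p q t <= (expR (`|p| * - ln (2^-1)) + expR (`|q| * - ln (2^-1))) *
     (t `^ p + (1 - t) `^ q).
Proof.
move=> /andP[t0 t1].
set Kp := expR (`|p| * - ln (2^-1)); set Kq := expR (`|q| * - ln (2^-1)).
have Kp0 : 0 <= Kp by exact: expR_ge0.
have Kq0 : 0 <= Kq by exact: expR_ge0.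
have h0 : (0:R) < 2^-1 by rewrite invr_gt0.
have tp0 := powR_ge0 t p; have tq0 := powR_ge0 (1 - t) q.
rewrite /gfun; have [th|th] := leP t (2^-1).
- have /andP[_ hq] := @powR_bnd (2^-1) (1 - t) q h0 ltac:(lra) ltac:(lra).
  rewrite -/Kq in hq.
  have : t `^ p * (1 - t) `^ q <= t `^ p * Kq by rewrite ler_wpM2l.
  nra.
- have /andP[_ hp] := @powR_bnd (2^-1) t p h0 ltac:(lra) ltac:(lra).
  rewrite -/Kp in hp.
  have : t `^ p * (1 - t) `^ q <= Kp * (1 - t) `^ q by rewrite ler_wpM2r.
  nra.
Qed.


Definition Eseq (n : nat) : set R := `[(n.+3%:R)^-1, 1 - (n.+3%:R)^-1]%classic.

Lemma Eseq_nd : nondecreasing_seq Eseq.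
Proof.
move=> n m nm; rewrite subsetEset => x; rewrite /Eseq /= !in_itv /= => /andP[h1 h2].
have h : (m.+3%:R : R)^-1 <= (n.+3%:R)^-1.
  by rewrite lef_pV2 ?posrE ?ltr0n // ler_nat.
move: h1 h2 h; set a := (n.+3%:R)^-1; set b := (m.+3%:R)^-1 => h1 h2 h.
by apply/andP; split; lra.
Qed.

Lemma Eseq_sub n : Eseq n `<=` `]0, 1[%classic.
Proof.
move=> x; rewrite /Eseq /= !in_itv /= => /andP[h1 h2].
have h0 : (0:R) < (n.+3%:R)^-1 by rewrite invr_gt0 ltr0n.
have h3 : (n.+3%:R : R)^-1 < 1 by rewrite invf_lt1 ?ltr0n // ltr1n.
move: h1 h2 h0 h3; set a := (n.+3%:R)^-1 => h1 h2 h0 h3.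
by apply/andP; split; lra.
Qed.

Lemma Eseq_cup : \bigcup_n Eseq n = `]0, 1[%classic.
Proof.
apply/seteqP; split; first by move=> x [n _]; exact: Eseq_sub.
move=> x /=; rewrite in_itv /= => /andP[x0 x1].
set m := Num.min x (1 - x).
have m0 : 0 < m by rewrite lt_min; apply/andP; split; lra.
have := @archi_boundP R (m^-1) ltac:(by rewrite invr_ge0 ltW).
set N := Num.Def.archi_bound _ => hN.
exists N => //; rewrite /Eseq /= in_itv /=.
have hN0 : (0:R) < N%:R by apply: lt_trans hN; rewrite invr_gt0.
have : (N.+3%:R : R)^-1 <= m.
  rewrite -[m]invrK lef_pV2 ?posrE ?invr_gt0 ?ltr0n //.
  apply: ltW; apply: lt_le_trans hN _; by rewrite ler_nat -addn3 leq_addr.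
have : m <= x by rewrite ge_min lexx.
have : m <= 1 - x by rewrite ge_min lexx orbT.
move=> h1 h2; move: (N.+3%:R : R)^-1 => a h3; apply/andP; split; lra.
Qed.

Lemma Eseq_m n : measurable (Eseq n).
Proof. exact: measurable_itv. Qed.

Lemma int_g_fin (p q : R) : -1 < p -> -1 < q ->
  (\int[mu]_(x in `]0%R, 1%R[%classic) (gfun p q x)%:E < +oo)%E.
Proof.
move=> p1 q1.
set K := expR (`|p| * - ln (2^-1)) + expR (`|q| * - ln (2^-1)).
have K0 : 0 <= K by rewrite addr_ge0 // expR_ge0.
set M := K * ((p+1)^-1 + (q+1)^-1).
have bnd n : (\int[mu]_(x in Eseq n) (gfun p q x)%:E <= M%:E)%E.
  have e0 : (0:R) < (n.+3%:R)^-1 by rewrite invr_gt0 ltr0n.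
  have e1 : (n.+3%:R : R)^-1 < 1 by rewrite invf_lt1 ?ltr0n // ltr1n.
  set e := (n.+3%:R : R)^-1 in e0 e1 *.
  apply: (@le_trans _ _ (\int[mu]_(x in Eseq n)
     (K%:E * ((x `^ p)%:E + ((1 - x) `^ q)%:E)))%E).
    apply: ge0_le_integral => //.
    - exact: Eseq_m.
    - by move=> x _; apply: E0; exact: gfun_ge0.
    - apply/measurable_EFinP; apply: measurable_funTS. exact: gfun_mT.
    - apply: emeasurable_funM; first exact: measurable_cst.
      apply: emeasurable_funD; apply/measurable_EFinP; apply: measurable_funTS.
        exact: measurable_powR.
      apply: (@measurableT_comp _ _ _ _ _ _ (@powR R ^~ q)); first exact: measurable_powR.
      by apply: measurable_funB => //; exact: measurable_cst.
    - move=> x /Eseq_sub /=; rewrite in_itv /= => hx.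
      by rewrite -EFinD -EFinM lee_fin gfun_ub.
  rewrite ge0_integralZl_EFin //; last 3 first.
  - exact: Eseq_m.
  - by move=> x _; rewrite adde_ge0 //; apply: E0; exact: powR_ge0.
  - apply: emeasurable_funD; apply/measurable_EFinP; apply: measurable_funTS.
      exact: measurable_powR.
    apply: (@measurableT_comp _ _ _ _ _ _ (@powR R ^~ q)); first exact: measurable_powR.
    by apply: measurable_funB => //; exact: measurable_cst.
  rewrite /M EFinM; apply: lee_wpmul2l; first by rewrite lee_fin.
  rewrite ge0_integralD //; last 5 first.
  - exact: Eseq_m.
  - by move=> x _; apply: E0; exact: powR_ge0.
  - by apply/measurable_EFinP; apply: measurable_funTS; exact: measurable_powR.
  - by move=> x _; apply: E0; exact: powR_ge0.
  - apply/measurable_EFinP; apply: measurable_funTS.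
    apply: (@measurableT_comp _ _ _ _ _ _ (@powR R ^~ q)); first exact: measurable_powR.
    by apply: measurable_funB => //; exact: measurable_cst.
  rewrite EFinD; apply: leeD.
  - apply: le_trans _ (@intA p e p1 e0 e1).
    apply: ge0_subset_integral => //.
    + exact: Eseq_m.
    + by apply/measurable_EFinP; apply: measurable_funTS; exact: measurable_powR.
    + by move=> x _; apply: E0; exact: powR_ge0.
    + move=> x; rewrite /Eseq /= !in_itv /= => /andP[h1 h2]; apply/andP; split; first exact: h1.
      by apply: le_trans h2 _; rewrite gerDl oppr_le0 ltW.
  - apply: le_trans _ (@intB q e q1 e0 e1).
    apply: ge0_subset_integral => //.
    + exact: Eseq_m.
    + apply/measurable_EFinP; apply: measurable_funTS.
      apply: (@measurableT_comp _ _ _ _ _ _ (@powR R ^~ q)); first exact: measurable_powR.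
      by apply: measurable_funB => //; exact: measurable_cst.
    + by move=> x _; apply: E0; exact: powR_ge0.
    + move=> x; rewrite /Eseq /= !in_itv /= => /andP[h1 h2]; apply/andP; split; last exact: h2.
      by apply: le_trans _ h1; apply: ltW.
have cv := @ge0_nondecreasing_set_cvg_integral _ (measurableTypeR R) R Eseq
  (fun x => (gfun p q x)%:E) mu Eseq_nd Eseq_m
  ltac:(move=> i; apply/measurable_EFinP; apply: measurable_funTS; exact: gfun_mT)
  (fun i x _ => @E0 _ (gfun_ge0 p q x)).
rewrite Eseq_cup in cv.
apply: (@le_lt_trans _ _ M%:E); last exact: ltry.
rewrite -(cvg_lim _ cv) //.
apply: lime_le; first by apply/cvg_ex; eexists; exact: cv.
exact: nearW.
Qed.


Lemma int_g_pos (p q : R) :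
  (0 < \int[mu]_(x in `]0%R, 1%R[%classic) (gfun p q x)%:E)%E.
Proof.
have h4 : (0:R) < 4^-1 by rewrite invr_gt0.
have h41 : (4^-1 : R) <= 1 by rewrite invf_le1 // ler1n.
set c := expR (- (`|p| * - ln (4^-1))) * expR (- (`|q| * - ln (4^-1))).
have c0 : 0 < c by rewrite mulr_gt0 // expR_gt0.
pose A : set R := `[(4^-1 : R), 3/4]%classic.
have hA : measurable A by exact: measurable_itv.
have H1 := @integral_cst _ _ R mu _ hA c%:E.
have H3 := @lebesgue_measure_itv R `[(4^-1 : R), 3/4].
match type of H1 with _ = (_ * ?m)%E =>
  have H4 : m = _ := H3 end.
rewrite H4 /= in H1.
rewrite ifT in H1; last by rewrite lte_fin; lra.
have H2 : (0 < c%:E * ((3/4)%:E - (4^-1)%:E))%E.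
  by rewrite -EFinB -EFinM lte_fin mulr_gt0 //; lra.
rewrite -H1 in H2.
have L1 : (\int[mu]_(x in A) (cst c%:E) x <= \int[mu]_(x in A) (gfun p q x)%:E)%E.
  apply: ge0_le_integral => //.
  - by move=> x _; apply: E0; exact: ltW.
  - apply/measurable_EFinP; apply: measurable_funTS; exact: gfun_mT.
  - move=> x; rewrite /A /= in_itv /= => /andP[x1 x2]; rewrite lee_fin /c /gfun.
    have /andP[hp _] := @powR_bnd (4^-1) x p h4 x1 ltac:(lra).
    have /andP[hq _] := @powR_bnd (4^-1) (1 - x) q h4 ltac:(lra) ltac:(lra).
    by apply: ler_pM => //; apply: ltW; exact: expR_gt0.
have L2 : (\int[mu]_(x in A) (gfun p q x)%:E <=
    \int[mu]_(x in `]0%R, 1%R[%classic) (gfun p q x)%:E)%E.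
  apply: ge0_subset_integral => //.
  - apply/measurable_EFinP; apply: measurable_funTS; exact: gfun_mT.
  - by move=> x _; apply: E0; exact: gfun_ge0.
  - move=> x; rewrite /A /= !in_itv /= => /andP[x1 x2]; apply/andP; split; lra.
exact: lt_le_trans H2 (le_trans L1 L2).
Qed.

Lemma betaB_gt0 (A B : R) : 0 < A -> 0 < B -> 0 < betaB A B.
Proof.
move=> A0 B0; rewrite /betaB /Rintegral; apply: fine_gt0.
apply/andP; split.
- exact: (int_g_pos (A - 1) (B - 1)).
- apply: (@int_g_fin (A - 1) (B - 1)); lra.
Qed.


Lemma Rint_scale (c : R) (f : R -> R) (D : set (measurableTypeR R)) : 0 <= c -> measurable D ->
  measurable_fun setT f -> (forall x, D x -> 0 <= f x) ->
  \int[mu]_(x in D) (c * f x) = c * \int[mu]_(x in D) f x.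
Proof.
move=> c0 mD mf f0; rewrite /Rintegral.
under eq_integral do rewrite EFinM.
rewrite ge0_integralZl_EFin //.
have : (0 <= \int[mu]_(x in D) (f x)%:E)%E.
  by apply: integral_ge0 => x Dx; apply: E0; exact: f0.
case: (\int[mu]_(x in D) (f x)%:E)%E => [r| |] //= _.
rewrite mulry; have [->|cn0] := eqVneq c 0; first by rewrite sgr0 mul0e /= mul0r.
by rewrite gtr0_sg ?mul1e /= ?mulr0 // lt_def cn0 c0.
by apply/measurable_EFinP; exact: measurable_funTS.
Qed.

Lemma powR_mul_nat (x r : R) (m : nat) : 0 < x -> x ^+ m * x `^ r = x `^ (r + m%:R).
Proof.
move=> x0; rewrite powRD; last by apply/implyP => _; rewrite gt_eqF.
by rewrite powR_mulrn ?ltW // mulrC.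
Qed.


Lemma term_int (a b : R) (n k : nat) : 0 < a -> 0 < b -> (k <= n)%N ->
  \int[mu]_(t in `]0, 1[) (h_samp n k t * beta_dens a b t) =
  'C(n, k)%:R / betaB a b * betaB (a + k%:R) (b + n%:R - k%:R).
Proof.
move=> a0 b0 kn.
have B0 := @betaB_gt0 a b a0 b0.
rewrite (@eq_Rintegral _ (measurableTypeR R) R mu _ (fun t => 'C(n, k)%:R / betaB a b *
   gfun (a + k%:R - 1) (b + n%:R - k%:R - 1) t)); last first.
  move=> t; rewrite inE /= in_itv /= => /andP[t0 t1].
  rewrite /h_samp /beta_dens /gfun.
  have -> : a + k%:R - 1 = (a - 1) + k%:R by ring.
  have -> : b + n%:R - k%:R - 1 = (b - 1) + (n - k)%:R by rewrite natrB //; ring.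
  rewrite -!powR_mul_nat; last 2 first.
  - by rewrite subr_gt0.
  - by [].
  ring.
rewrite (@Rint_scale _ (gfun (a + k%:R - 1) (b + n%:R - k%:R - 1))) //.
- by rewrite divr_ge0 // ltW.
- exact: gfun_mT.
- by move=> x _; exact: gfun_ge0.
Qed.

End S.

Theorem proposition5 (R : realType) (a01 a10 : R) (xtri : nat) (theta : R) :
  0 < a01 -> 0 < a10 -> 0 < theta < 1 ->
  let atri := a01 + a10 in
  ci_prior a01 a10 xtri theta =
  \sum_(x01 < xtri.+1)
     'C(xtri, x01)%:R * (1 / 2) ^+ xtri *
     beta_dens (a01 + x01%:R) (atri - a01 + xtri%:R - x01%:R) theta.
Proof.
move=> a0 b0 /andP[t0 t1] atri.
have hab : atri - a01 = a10 by rewrite /atri; ring.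
rewrite hab /ci_prior big_distrr /=; apply: eq_bigr => k _.
have kn : (k <= xtri)%N by rewrite -ltnS.
have B0 := @betaB_gt0 R a01 a10 a0 b0.
have C0 : ('C(xtri, k)%:R : R) != 0 by rewrite pnatr_eq0 -lt0n bin_gt0.
rewrite /BF_Co term_int //.
have -> : h_samp xtri k (1 / 2 : R) = 'C(xtri, k)%:R * (1 / 2) ^+ xtri.
  rewrite /h_samp (_ : 1 - 1 / 2 = 1 / 2 :> R); last by field.
  by rewrite -mulrA -exprD subnKC.
rewrite /beta_dens /h_samp.
have -> : a01 + k%:R - 1 = (a01 - 1) + k%:R by ring.
have -> : a10 + xtri%:R - k%:R - 1 = (a10 - 1) + (xtri - k)%:R by rewrite natrB //; ring.
rewrite -!powR_mul_nat; last 2 first.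
- by rewrite subr_gt0.
- by [].
set I := betaB (a01 + k%:R) (a10 + xtri%:R - k%:R).
set B := betaB a01 a10.
rewrite invf_div invfM invf_div.
move: (I^-1) => J.
have Bn0 : B != 0 by rewrite gt_eqF.
have h2 : (1 / 2 : R) ^+ xtri != 0 by rewrite expf_neq0 // div1r invr_eq0.
field.
by apply/andP; split.
Qed.
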